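(* Let $X$ be a finite set of proposals with $|X|\geq 3$. No divisiveness selection function $\Delta$ on $X$ satisfies both Pareto Efficiency and Weak Position Unanimity.
   Context: $X!$ is the set of strict linear orders on $X$; a profile is a function $R:N\to X!$ with $N\subset\mathbb{N}$ finite and nonempty. A divisiveness selection function (DSF) maps every profile to a nonempty subset of $X$. A proposal $x$ occurs in the same position throughout $R$ if the number of proposals ranked above $x$ is the same in every agent's ranking. A proposal $x$ is Pareto-dominated in $R$ if there is a proposal $y$ that every agent in $N$ ranks above $x$. Pareto Efficiency: $x\notin\Delta(R)$ for every profile $R$ and every Pareto-dominated proposal $x$ in $R$. Weak Position Unanimity: for every profile $R$ and every proposal $x$ occurring in the same position throughout $R$, either $x\notin\Delta(R)$ or $\Delta(R)=X$. *)

(* Defs.v *)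
From mathcomp Require Import all_boot.
From mathcomp Require Export finmap.
Set Implicit Arguments. Unset Strict Implicit. Unset Printing Implicit Defensive.
Local Open Scope fset_scope.

(* [r y x] reads: "y is ranked above x". *)
Definition strict_linear_order (X : finType) (r : rel X) : Prop :=
  irreflexive r /\ transitive r /\ (forall x y : X, x != y -> r x y || r y x).

Definition is_profile (X : finType) (N : {fset nat}) (R : N -> rel X) : Prop :=
  forall i : N, strict_linear_order (R i).

Definition selection_fun (X : finType) := forall N : {fset nat}, (N -> rel X) -> {set X}.

Definition is_DSF (X : finType) (D : selection_fun X) : Prop :=
  forall (N : {fset nat}) (R : N -> rel X),
    N != fset0 -> is_profile R -> D N R != set0.

Definition position (X : finType) (r : rel X) (x : X) : nat := #|[pred y | r y x]|.

Definition same_position (X : finType) (N : {fset nat}) (R : N -> rel X) (x : X) : Prop :=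
  forall i j : N, position (R i) x = position (R j) x.

Definition pareto_dominated (X : finType) (N : {fset nat}) (R : N -> rel X) (x : X) : Prop :=
  exists y : X, forall i : N, R i y x.

Definition pareto_efficiency (X : finType) (D : selection_fun X) : Prop :=
  forall (N : {fset nat}) (R : N -> rel X), N != fset0 -> is_profile R ->
    forall x : X, pareto_dominated R x -> x \notin D N R.

Definition weak_position_unanimity (X : finType) (D : selection_fun X) : Prop :=
  forall (N : {fset nat}) (R : N -> rel X), N != fset0 -> is_profile R ->
    forall x : X, same_position R x -> x \notin D N R \/ D N R = [set: X].

(* Main.v *)
Require Import Defs.
From mathcomp Require Import all_boot finmap.

Theorem theorem1 (X : finType) (hX : 3 <= #|X|) :
  ~ (exists D : selection_fun X,
       [/\ is_DSF D, pareto_efficiency D & weak_position_unanimity D]).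
Proof.
case=> D [hD hP hW].
pose r : rel X := fun y x => (enum_rank y < enum_rank x)%N.
pose N : {fset nat} := [fset 0%N]%fset.
pose R : N -> rel X := fun _ => r.
have hN : N != fset0%fset.
  by apply/eqP => /fsetP /(_ 0%N); rewrite !inE.
have hR : is_profile R.
  move=> i; split; first by move=> x; rewrite /R /r ltnn.
  split; first by move=> y x z; rewrite /R /r; apply: ltn_trans.
  move=> x y nxy; rewrite /R /r; case: ltngtP => //= e.
  by move: nxy; rewrite (enum_rank_inj (val_inj e)) eqxx.
have hsame : forall x, same_position R x.
  move=> x i j; congr position.
have /set0Pn [x0 x0D] := hD N R hN hR.
have DT : D N R = [set: X].
  by case: (hW N R hN hR x0 (hsame x0)) => //; rewrite x0D.
have /card_gt1P [a [b [_ _ nab]]] : (1 < #|X|)%N by apply: leq_trans hX.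
have : r a b || r b a.
  rewrite /r; case: ltngtP => //= e.
  by move: nab; rewrite (enum_rank_inj (val_inj e)) eqxx.
case/orP => [hab|hba].
- have := hP N R hN hR b (ex_intro _ a (fun _ => hab)).
  by rewrite DT inE.
- have := hP N R hN hR a (ex_intro _ b (fun _ => hba)).
  by rewrite DT inE.
Qed.
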